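(* The Lie algebra $\Lambda(\mathbb{Q}\mathrm{Par}_2)$ is generated by $1$, $x_1x_2$, $x_1^2x_2$, $x_1x_2^2$, and $x_1^3x_2+x_1x_2^3$.
   Context: The nonsymmetric operad $\mathrm{Par}_2$: $\mathrm{Par}_2((0))=\emptyset$, $\mathrm{Par}_2((1))=\{1\}$, and for $m\ge2$, $\mathrm{Par}_2((m))=\{x_1^ax_2^b: a,b\ge1,a+b=m\}$ (order-preserving partitions of $\{1,\dots,m\}$ into two consecutive blocks of sizes $a,b$). Partial composition: if $x_l$ is the variable whose block contains $s$, then $(x_1^{a_1}x_2^{a_2})\circ_s d$ is obtained by raising the exponent of $x_l$ by $j-1$, where $j$ is the degree of the monomial $d$; $1$ is a two-sided unit. $\Lambda(\mathbb{Q}\mathrm{Par}_2)=\bigoplus_{m\ge1}\mathbb{Q}\mathrm{Par}_2((m))$ with Lie bracket $[c,d]=\sum_{t=1}^{j}d\circ_tc-\sum_{s=1}^{k}c\circ_sd$ for $c$ of arity $k$, $d$ of arity $j$. *)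

(* Defs.v *)
From HB Require Import structures.
From mathcomp Require Import all_boot all_order all_algebra.
From mathcomp Require Import finmap monalg.
Set Implicit Arguments. Unset Strict Implicit. Unset Printing Implicit Defensive.
Import GRing.Theory.
Local Open Scope ring_scope.

(* Basis of QPar_2:  None  = the unit 1 (arity 1);
   Some (a, b) = the monomial x_1^(a+1) x_2^(b+1)  (arity a+b+2). *)
Definition par2 := option (nat * nat).

Definition par2_arity (c : par2) : nat :=
  match c with None => 1%N | Some (a, b) => (a + b + 2)%N end.

(* partial composition  c o_s d  (1 <= s <= arity c) *)
Definition par2_comp (c : par2) (s : nat) (d : par2) : par2 :=
  match c with
  | None => d
  | Some (a, b) =>
      let j := par2_arity d in
      if (s <= a.+1)%N then Some ((a + j - 1)%N, b) else Some (a, (b + j - 1)%N)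
  end.

Definition LPar2 := {malg rat[par2]}.

Definition basisv (c : par2) : LPar2 := << 1 *g c >>.

Definition par2_bracketB (c d : par2) : LPar2 :=
  \sum_(t < par2_arity d) basisv (par2_comp d t.+1 c)
  - \sum_(s < par2_arity c) basisv (par2_comp c s.+1 d).

Definition par2_bracket (f g : LPar2) : LPar2 :=
  \sum_(u <- msupp f) \sum_(v <- msupp g) (f@_u * g@_v) *: par2_bracketB u v.

Definition lie_subalgebra (S : LPar2 -> Prop) : Prop :=
  [/\ S 0,
      (forall f g, S f -> S g -> S (f + g)),
      (forall (a : rat) f, S f -> S (a *: f)) &
      (forall f g, S f -> S g -> S (par2_bracket f g))].

Definition lie_generated_by (gens : seq LPar2) : Prop :=
  forall S : LPar2 -> Prop, lie_subalgebra S ->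
    (forall x, x \in gens -> S x) -> forall f, S f.

(* x_1^a x_2^b for a, b >= 1 *)
Definition mono (a b : nat) : LPar2 := basisv (Some (a.-1, b.-1)).

(* Main.v *)
Require Import Defs.
From mathcomp Require Import all_boot all_order all_algebra.
From mathcomp Require Import finmap monalg.
Local Open Scope ring_scope.

From HB Require Import structures.
From mathcomp Require Import zify ring.
Set Implicit Arguments. Unset Strict Implicit. Unset Printing Implicit Defensive.
Import GRing.Theory Num.Theory.
Local Open Scope ring_scope.

Lemma sum_comp a b d :
  \sum_(s < par2_arity (Some (a, b))) basisv (par2_comp (Some (a, b)) s.+1 d) =
  basisv (Some ((a + par2_arity d - 1)%N, b)) *+ a.+1 +
  basisv (Some (a, (b + par2_arity d - 1)%N)) *+ b.+1.
Proof.
rewrite /= -(big_mkord xpredT (fun s => basisv (par2_comp (Some (a, b)) s.+1 d))).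
rewrite (big_cat_nat _ (n := a.+1)) //=; last by lia.
rewrite (eq_big_nat _ _ (F2 := fun _ => basisv (Some ((a + par2_arity d - 1)%N, b)))); last first.
  by move=> i /andP [_ Hi] /=; rewrite ifT.
rewrite [X in _ + X](eq_big_nat _ _ (F2 := fun _ => basisv (Some (a, (b + par2_arity d - 1)%N)))); last first.
  by move=> i /andP [Hi _] /=; rewrite ifF //; apply/negbTE; rewrite -ltnNge.
rewrite !sumr_const_nat; congr (_ *+ _ + _ *+ _); lia.
Qed.

Lemma basisv_scale x k : << x *g k >> = x *: basisv k.
Proof. apply/malgP=> k'; rewrite mcoeffZ /basisv !mcoeffU; by case: eqP; rewrite ?mulr1 ?mulr0. Qed.

Lemma bracket_basis c d : par2_bracket (basisv c) (basisv d) = par2_bracketB c d.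
Proof.
rewrite /par2_bracket /basisv !msuppU oner_eq0 big_seq_fset1 big_seq_fset1 !mcoeffU eqxx.
by rewrite mulr1n eqxx mul1r scale1r.
Qed.

Lemma br0 a b p q :
  par2_bracket (basisv (Some (a, b))) (basisv (Some (p, q))) =
  basisv (Some ((p + (a + b + 2) - 1)%N, q)) *+ p.+1 + basisv (Some (p, (q + (a + b + 2) - 1)%N)) *+ q.+1
  - (basisv (Some ((a + (p + q + 2) - 1)%N, b)) *+ a.+1 + basisv (Some (a, (b + (p + q + 2) - 1)%N)) *+ b.+1).
Proof.
by rewrite bracket_basis /par2_bracketB !sum_comp.
Qed.

Lemma br_mono a b p q r1 s2 r3 s4 : (0 < a)%N -> (0 < b)%N -> (0 < p)%N -> (0 < q)%N ->
  r1 = (p + a + b - 1)%N -> s2 = (q + a + b - 1)%N ->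
  r3 = (a + p + q - 1)%N -> s4 = (b + p + q - 1)%N ->
  par2_bracket (mono a b) (mono p q) =
  mono r1 q *+ p + mono p s2 *+ q - (mono r3 b *+ a + mono a s4 *+ b).
Proof.
case: a => // a _; case: b => // b _; case: p => // p _; case: q => // q _.
move=> h1 h2 h3 h4.
rewrite /mono /= br0.
have -> : (p + (a + b + 2) - 1)%N = r1.-1 by lia.
have -> : (q + (a + b + 2) - 1)%N = s2.-1 by lia.
have -> : (a + (p + q + 2) - 1)%N = r3.-1 by lia.
have -> : (b + (p + q + 2) - 1)%N = s4.-1 by lia.
by [].
Qed.

Lemma coefE c k : (basisv c)@_k = (c == k)%:R.
Proof. by rewrite /basisv mcoeffU. Qed.

Lemma test m :
  (- ((m + 6) * (m + 1) * (m + 2) * (m + 7))%:R) *: mono 1 (m + 5) =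
   ((m * m + 8 * m + 10)%:R) *: (
   par2_bracket (mono 1 1) (mono 2 (m + 3)) + 2%:R *: par2_bracket (mono 1 (m + 3)) (mono 1 2)
   - (m + 3)%:R *: par2_bracket (mono 1 1) (mono 1 (m + 4)) - 2%:R *: par2_bracket (mono 1 1) (mono (m + 4) 1))
   - ((m + 4)%:R) *: (
   par2_bracket (mono 1 1) (mono (m + 3) 2) + 2%:R *: par2_bracket (mono (m + 3) 1) (mono 2 1)
   - (m + 3)%:R *: par2_bracket (mono 1 1) (mono (m + 4) 1) - 2%:R *: par2_bracket (mono 1 1) (mono 1 (m + 4))).
Proof.
rewrite (@br_mono 1 1 2 (m + 3) 3 (m + 4) (m + 5) (m + 5)) //; try lia.
rewrite (@br_mono 1 (m + 3) 1 2 (m + 4) (m + 5) 3 (m + 5)) //; try lia.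
rewrite (@br_mono 1 1 1 (m + 4) 2 (m + 5) (m + 5) (m + 5)) //; try lia.
rewrite (@br_mono 1 1 (m + 4) 1 (m + 5) 2 (m + 5) (m + 5)) //; try lia.
rewrite (@br_mono 1 1 (m + 3) 2 (m + 4) 3 (m + 5) (m + 5)) //; try lia.
rewrite (@br_mono (m + 3) 1 2 1 (m + 5) (m + 4) (m + 5) 3) //; try lia.
move: (mono 1 (m+5)) (mono 2 (m+4)) (mono 3 (m+3)) (mono (m+3) 3) (mono (m+4) 2) (mono (m+5) 1) => x1 x2 x3 x4 x5 x6.
apply/malgP => k.
rewrite !(mcoeffD, mcoeffB, mcoeffN, mcoeffZ, mcoeffMn).

ring.
Qed.

Lemma test2 m :
  (- ((m + 6) * (m + 1) * (m + 2) * (m + 7))%:R) *: mono (m + 5) 1 =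
   ((m * m + 8 * m + 10)%:R) *: (
   par2_bracket (mono 1 1) (mono (m + 3) 2) + 2%:R *: par2_bracket (mono (m + 3) 1) (mono 2 1)
   - (m + 3)%:R *: par2_bracket (mono 1 1) (mono (m + 4) 1) - 2%:R *: par2_bracket (mono 1 1) (mono 1 (m + 4)))
   - ((m + 4)%:R) *: (
   par2_bracket (mono 1 1) (mono 2 (m + 3)) + 2%:R *: par2_bracket (mono 1 (m + 3)) (mono 1 2)
   - (m + 3)%:R *: par2_bracket (mono 1 1) (mono 1 (m + 4)) - 2%:R *: par2_bracket (mono 1 1) (mono (m + 4) 1)).
Proof.
rewrite (@br_mono 1 1 2 (m + 3) 3 (m + 4) (m + 5) (m + 5)) //; try lia.
rewrite (@br_mono 1 (m + 3) 1 2 (m + 4) (m + 5) 3 (m + 5)) //; try lia.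
rewrite (@br_mono 1 1 1 (m + 4) 2 (m + 5) (m + 5) (m + 5)) //; try lia.
rewrite (@br_mono 1 1 (m + 4) 1 (m + 5) 2 (m + 5) (m + 5)) //; try lia.
rewrite (@br_mono 1 1 (m + 3) 2 (m + 4) 3 (m + 5) (m + 5)) //; try lia.
rewrite (@br_mono (m + 3) 1 2 1 (m + 5) (m + 4) (m + 5) 3) //; try lia.
move: (mono 1 (m+5)) (mono 2 (m+4)) (mono 3 (m+3)) (mono (m+3) 3) (mono (m+4) 2) (mono (m+5) 1) => x1 x2 x3 x4 x5 x6.
apply/malgP => k.
rewrite !(mcoeffD, mcoeffB, mcoeffN, mcoeffZ, mcoeffMn).

ring.
Qed.


Lemma id5a :
  30%:R *: mono 1 4 = 13%:R *: par2_bracket (mono 1 1) (mono 1 3) - 5%:R *: par2_bracket (mono 1 1) (mono 2 2)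
    + 7%:R *: par2_bracket (mono 1 1) (mono 3 1) - 3%:R *: par2_bracket (mono 1 2) (mono 2 1).
Proof.
rewrite (@br_mono 1 1 1 3 2 4 4 4) // (@br_mono 1 1 2 2 3 3 4 4) // (@br_mono 1 1 3 1 4 2 4 4) //.
rewrite (@br_mono 1 2 2 1 4 3 3 4) //.
move: (mono 1 4) (mono 2 3) (mono 3 2) (mono 4 1) => x1 x2 x3 x4.
apply/malgP => k; rewrite !(mcoeffD, mcoeffB, mcoeffN, mcoeffZ, mcoeffMn); ring.
Qed.

Lemma id5b :
  30%:R *: mono 4 1 = 7%:R *: par2_bracket (mono 1 1) (mono 1 3) - 5%:R *: par2_bracket (mono 1 1) (mono 2 2)
    + 13%:R *: par2_bracket (mono 1 1) (mono 3 1) + 3%:R *: par2_bracket (mono 1 2) (mono 2 1).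
Proof.
rewrite (@br_mono 1 1 1 3 2 4 4 4) // (@br_mono 1 1 2 2 3 3 4 4) // (@br_mono 1 1 3 1 4 2 4 4) //.
rewrite (@br_mono 1 2 2 1 4 3 3 4) //.
move: (mono 1 4) (mono 2 3) (mono 3 2) (mono 4 1) => x1 x2 x3 x4.
apply/malgP => k; rewrite !(mcoeffD, mcoeffB, mcoeffN, mcoeffZ, mcoeffMn); ring.
Qed.

Lemma id4a :
  4%:R *: mono 1 3 = 2%:R *: (mono 3 1 + mono 1 3) - par2_bracket (mono 1 1) (mono 2 1)
    + par2_bracket (mono 1 1) (mono 1 2).
Proof.
rewrite (@br_mono 1 1 2 1 3 2 3 3) // (@br_mono 1 1 1 2 2 3 3 3) //.
move: (mono 1 3) (mono 2 2) (mono 3 1) => x1 x2 x3.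
apply/malgP => k; rewrite !(mcoeffD, mcoeffB, mcoeffN, mcoeffZ, mcoeffMn); ring.
Qed.

Lemma id4b :
  4%:R *: mono 3 1 = 2%:R *: (mono 3 1 + mono 1 3) + par2_bracket (mono 1 1) (mono 2 1)
    - par2_bracket (mono 1 1) (mono 1 2).
Proof.
rewrite (@br_mono 1 1 2 1 3 2 3 3) // (@br_mono 1 1 1 2 2 3 3 3) //.
move: (mono 1 3) (mono 2 2) (mono 3 1) => x1 x2 x3.
apply/malgP => k; rewrite !(mcoeffD, mcoeffB, mcoeffN, mcoeffZ, mcoeffMn); ring.
Qed.

Section Gen.
Variable S : LPar2 -> Prop.
Hypothesis HS : lie_subalgebra S.

Let S0 : S 0. Proof. by case: HS. Qed.
Let SD f g : S f -> S g -> S (f + g). Proof. by case: HS => _ h _ _; apply: h. Qed.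
Let SZ (a : rat) f : S f -> S (a *: f). Proof. by case: HS => _ _ h _; apply: h. Qed.
Let Sbr f g : S f -> S g -> S (par2_bracket f g). Proof. by case: HS => _ _ _ h; apply: h. Qed.
Let SB f g : S f -> S g -> S (f - g).
Proof. by move=> hf hg; rewrite -scaleN1r; apply: SD => //; apply: SZ. Qed.
Let SMn f n : S f -> S (f *+ n).
Proof. by move=> hf; rewrite -scaler_nat; apply: SZ. Qed.

Lemma S_inv (K : rat) x y : K != 0 -> K *: x = y -> S y -> S x.
Proof.
move=> hK hxy hy; have -> : x = K^-1 *: y by rewrite -hxy scalerA mulVf // scale1r.
exact: SZ.
Qed.

Lemma solve_lin (X Y E1 E2 D : LPar2) i a : (0 < i)%N ->
  D = X *+ i + Y *+ a - (E1 *+ 1 + E2 *+ 1) -> S D -> S Y -> S E1 -> S E2 -> S X.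
Proof.
move=> hi hD sD sY s1 s2.
apply: (@S_inv i%:R X (D - Y *+ a + (E1 *+ 1 + E2 *+ 1))).
- by rewrite pnatr_eq0 -lt0n.
- by rewrite hD scaler_nat (addrAC (X *+ i + Y *+ a)) subrK addrK.
- by apply: SD; [apply: SB => //; apply: SMn|apply: SD; apply: SMn].
Qed.

Lemma rec_step n : (3 <= n)%N ->
  (forall a b, (0 < a)%N -> (0 < b)%N -> (a + b < n)%N -> S (mono a b)) ->
  S (mono 1 (n - 1)) -> S (mono (n - 1) 1) ->
  forall i, (0 < i)%N -> (i < n)%N -> S (mono i (n - i)).
Proof.
move=> hn IH h1 hn1; elim=> // i IHi _ hi.
case: i IHi hi => [|i] IHi hi; first by [].
have Hi : S (mono i.+1 (n - i.+1)) by apply: IHi => //; lia.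
have -> : (n - i.+2 = n - 1 - i.+1)%N by lia.
apply: (@solve_lin _ (mono i.+1 (n - i.+1)) (mono (n - 1) 1) (mono 1 (n - 1))
          (par2_bracket (mono 1 1) (mono i.+1 (n - 1 - i.+1))) i.+1 (n - 1 - i.+1)) => //.
- rewrite (@br_mono 1 1 i.+1 (n - 1 - i.+1) i.+2 (n - i.+1) (n - 1) (n - 1)) //; lia.
- apply: Sbr; apply: IH; lia.
Qed.


Hypothesis g1 : S (mono 1 1).
Hypothesis g2 : S (mono 2 1).
Hypothesis g3 : S (mono 1 2).
Hypothesis g4 : S (mono 3 1 + mono 1 3).

Lemma ends n : (4 <= n)%N ->
  (forall a b, (0 < a)%N -> (0 < b)%N -> (a + b < n)%N -> S (mono a b)) ->
  S (mono 1 (n - 1)) /\ S (mono (n - 1) 1).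
Proof.
move=> hn IH.
have Sb : forall a b p q, (0 < a)%N -> (0 < b)%N -> (0 < p)%N -> (0 < q)%N ->
   (a + b < n)%N -> (p + q < n)%N -> S (par2_bracket (mono a b) (mono p q)).
  by move=> a b p q ha hb hp hq h1 h2; apply: Sbr; apply: IH.
case: n hn IH Sb => [|[|[|[|[|[|m]]]]]] // _ IH Sb.
- split.
  + apply: (@S_inv 4%:R); [by []| exact: id4a|].
    apply: SD; first (apply: SB; first exact: SZ); exact: Sb.
  + apply: (@S_inv 4%:R); [by []| exact: id4b|].
    apply: SB; first (apply: SD; first exact: SZ); exact: Sb.
- split.
  + apply: (@S_inv 30%:R); [by []| exact: id5a|].
    by apply: SB; [apply: SD; [apply: SB; apply: SZ|apply: SZ]|apply: SZ]; apply: Sb.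
  + apply: (@S_inv 30%:R); [by []| exact: id5b|].
    by apply: SD; [apply: SD; [apply: SB; apply: SZ|apply: SZ]|apply: SZ]; apply: Sb.
- have -> : (m.+4.+2 - 1 = m + 5)%N by lia.
  have SQ : forall (A B C D : LPar2), S A -> S B -> S C -> S D ->
      S (A + 2%:R *: B - (m + 3)%:R *: C - 2%:R *: D).
    by move=> A B C D hA hB hC hD; apply: SB; [apply: SB; [apply: SD; [|apply: SZ]|apply: SZ]|apply: SZ].
  split.
  + apply: (@S_inv (- ((m + 6) * (m + 1) * (m + 2) * (m + 7))%:R)).
    * rewrite oppr_eq0 pnatr_eq0; lia.
    * exact: test.
    * apply: SB; apply: SZ; apply: SQ; apply: Sb; lia.
  + apply: (@S_inv (- ((m + 6) * (m + 1) * (m + 2) * (m + 7))%:R)).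
    * rewrite oppr_eq0 pnatr_eq0; lia.
    * exact: test2.
    * apply: SB; apply: SZ; apply: SQ; apply: Sb; lia.
Qed.

Lemma all_mono n : forall a b, (0 < a)%N -> (0 < b)%N -> (a + b <= n)%N -> S (mono a b).
Proof.
elim: n => [|n IH] a b ha hb hab; first lia.
case: (ltnP (a + b) n.+1) => hlt; first by apply: IH; lia.
have Hb : b = (n.+1 - a)%N by lia.
have IH' : forall a b, (0 < a)%N -> (0 < b)%N -> (a + b < n.+1)%N -> S (mono a b).
  by move=> a' b' ha' hb' h; apply: IH; lia.
case: (leqP 4 n.+1) => h4.
  have [e1 e2] := ends h4 IH'.
  rewrite Hb; apply: rec_step => //; lia.
case: a ha Hb hab hlt => [|[|[|a]]] // _; case: b hb => [|[|[|b]]] // _ Hb hab hlt; lia.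
Qed.

End Gen.

Theorem corollary6p3 :
  lie_generated_by
    [:: basisv None; mono 1 1; mono 2 1; mono 1 2; mono 3 1 + mono 1 3].
Proof.
move=> S HS Hg f.
have g0 : S (basisv None) by apply: Hg; rewrite in_cons; apply/orP; left.
have g1 : S (mono 1 1).
  by apply: Hg; rewrite in_cons; apply/orP; right; rewrite in_cons; apply/orP; left.
have g2 : S (mono 2 1).
  by apply: Hg; do 2 (rewrite in_cons; apply/orP; right); rewrite in_cons; apply/orP; left.
have g3 : S (mono 1 2).
  by apply: Hg; do 3 (rewrite in_cons; apply/orP; right); rewrite in_cons; apply/orP; left.
have g4 : S (mono 3 1 + mono 1 3).
  by apply: Hg; do 4 (rewrite in_cons; apply/orP; right); rewrite in_cons; apply/orP; left.
have Sbasis : forall c, S (basisv c).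
  case=> [[a b]|//].
  exact: (@all_mono S HS g1 g2 g3 g4 (a.+1 + b.+1) a.+1 b.+1).
case: HS => S0 SD SZ _.
rewrite (monalgE f); apply: (big_ind (fun x => S x)) => // k _.
by rewrite basisv_scale; apply: SZ.
Qed.
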